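(* Let $\delta,\varepsilon,\varepsilon'>0$ and $M\in\mathbb{N}$. Let $\mu$ be a distribution on $\{0,1\}^n\times\{0,1\}^n$ and $f\colon\{0,1\}^n\times\{0,1\}^n\to\{0,1\}$ such that $(f,\mu)$ has $(\varepsilon,\delta)$ relative-discrepancy. If $\Pi$ is a protocol with universal external information at most $M$, then for $(X,Y)\sim\mu$, \[ \mathrm{SD}\big(\Pi(X,Y)|_{f(X,Y)=0},\ \Pi(X,Y)|_{f(X,Y)=1}\big)\le 20\Big(\varepsilon+\varepsilon'+\frac{2^{4M}}{\varepsilon'^2}\delta\Big). \]
   Context: $\mathrm{SD}(P,Q)=\frac12\sum_u|P(u)-Q(u)|$ is statistical distance. $(f,\mu)$ has $(\varepsilon,\delta)$ relative-discrepancy if there is a distribution $\rho$ such that for every rectangle $R=A\times B$ with $\rho(R)\ge\delta$, $\mu(R\cap f^{-1}(0))\ge(\frac12-\varepsilon)\rho(R)$ and $\mu(R\cap f^{-1}(1))\ge(\frac12-\varepsilon)\rho(R)$. Protocols: Alice and Bob alternate, Alice sending $A_1,\dots,A_m$, Bob $B_1,\dots,B_m$, order $A_1,B_1,A_2,\dots$, each message depending on the sender's input, previous messages and the sender's randomness. For transcript $\pi=(a,b)$, $P^x_A(\pi)=\prod_j\Pr[A_j=a_j\mid A_{<j}=a_{<j},B_{<j}=b_{<j},X=x]$, $P^y_B(\pi)=\prod_j\Pr[B_j=b_j\mid A_{\le j}=a_{\le j},B_{<j}=b_{<j},Y=y]$. Universal external information at most $M$: there exist non-negative $\eta_A,\eta_B$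 on transcripts with $\eta_A\eta_B$ a probability distribution and, for all $x,y,\pi$, $2^{-M}\le P^x_A(\pi)/\eta_A(\pi)\le2^M$ and $2^{-M}\le P^y_B(\pi)/\eta_B(\pi)\le 2^M$. *)

(* Defs.v *)
From mathcomp Require Import all_boot all_order all_algebra.
Set Implicit Arguments. Unset Strict Implicit. Unset Printing Implicit Defensive.
Import Order.TTheory GRing.Theory Num.Theory.
Local Open Scope ring_scope.

Definition bits (n : nat) := {ffun 'I_n -> bool}.

Section Defs.
Variable R : realFieldType.

Definition is_distr (T : finType) (p : T -> R) : Prop :=
  (forall t, 0 <= p t) /\ \sum_(t : T) p t = 1.

Definition SD (T : finType) (P Q : T -> R) : R :=
  2^-1 * \sum_(u : T) `|P u - Q u|.

(* measure of a rectangle A x B, and of its intersection with f^{-1}(z)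
   (bits 0/1 are encoded as false/true) *)
Definition rect_mass (X Y : finType) (p : X * Y -> R) (A : {set X}) (B : {set Y}) : R :=
  \sum_(u : X * Y | (u.1 \in A) && (u.2 \in B)) p u.

Definition rect_mass_f (X Y : finType) (p : X * Y -> R) (f : X * Y -> bool) (z : bool)
  (A : {set X}) (B : {set Y}) : R :=
  \sum_(u : X * Y | [&& u.1 \in A, u.2 \in B & f u == z]) p u.

Definition rel_discrepancy (X Y : finType) (f : X * Y -> bool) (mu : X * Y -> R)
  (eps delta : R) : Prop :=
  exists rho : X * Y -> R, is_distr rho /\
    forall (A : {set X}) (B : {set Y}), rect_mass rho A B >= delta ->
      rect_mass_f mu f false A B >= (2^-1 - eps) * rect_mass rho A B /\
      rect_mass_f mu f true A B >= (2^-1 - eps) * rect_mass rho A B.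

(* A randomized protocol with m rounds, order A_1,B_1,...,A_m,B_m.  The protocol is given by
   the conditional distributions of each message given the sender's input
   and the previous messages (history = (Alice's previous messages,
   Bob's previous messages)); the round is the length of the history. *)
Record protocol (X Y : finType) (m : nat) (MA MB : finType) := Protocol {
  alice : X -> seq MA -> seq MB -> MA -> R;
  bob   : Y -> seq MA -> seq MB -> MB -> R }.

Definition valid_protocol (X Y : finType) m (MA MB : finType)
  (P : protocol X Y m MA MB) : Prop :=
  (forall x ha hb, is_distr (alice P x ha hb)) /\
  (forall y ha hb, is_distr (bob P y ha hb)).

Definition transcript m (MA MB : finType) := (m.-tuple MA * m.-tuple MB)%type.

Definition PA (X Y : finType) m (MA MB : finType) (P : protocol X Y m MA MB)
  (x : X) (pi : transcript m MA MB) : R :=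
  \prod_(j < m) alice P x (take j pi.1) (take j pi.2) (tnth pi.1 j).

(* P^y_B(pi) = prod_j Pr[B_j = b_j | A_<=j = a_<=j, B_<j = b_<j, Y = y] *)
Definition PB (X Y : finType) m (MA MB : finType) (P : protocol X Y m MA MB)
  (y : Y) (pi : transcript m MA MB) : R :=
  \prod_(j < m) bob P y (take j.+1 pi.1) (take j pi.2) (tnth pi.2 j).

Definition univ_ext_info_le (X Y : finType) m (MA MB : finType)
  (P : protocol X Y m MA MB) (M : nat) : Prop :=
  exists etaA etaB : transcript m MA MB -> R,
    (forall pi, 0 <= etaA pi) /\ (forall pi, 0 <= etaB pi) /\
    is_distr (fun pi => etaA pi * etaB pi) /\
    forall x y pi,
      2 ^- M <= PA P x pi / etaA pi <= 2 ^+ M /\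
      2 ^- M <= PB P y pi / etaB pi <= 2 ^+ M.

Definition transcript_cond (X Y : finType) m (MA MB : finType)
  (P : protocol X Y m MA MB) (mu : X * Y -> R) (f : X * Y -> bool) (z : bool)
  (pi : transcript m MA MB) : R :=
  (\sum_(u : X * Y | f u == z) mu u * PA P u.1 pi * PB P u.2 pi) /
  (\sum_(u : X * Y | f u == z) mu u).

End Defs.

(* Main.v *)
Require Import Defs.
From mathcomp Require Import all_boot all_order all_algebra.
From mathcomp Require Import ring lra.
Import Order.TTheory GRing.Theory Num.Theory.
Local Open Scope ring_scope.
Lemma sum_tupleS (R : realFieldType) (T : finType) k (F : k.+1.-tuple T -> R) :
  \sum_(t : k.+1.-tuple T) F t = \sum_(x : T) \sum_(t : k.-tuple T) F [tuple of x :: t].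
Proof.
rewrite pair_big /=.
rewrite (reindex (fun p : T * k.-tuple T => [tuple of p.1 :: p.2])) /=.
  by apply: eq_bigr => -[x t].
exists (fun t : k.+1.-tuple T => (thead t, [tuple of behead t])).
  by move=> [x t] _; congr pair; apply: val_inj.
move=> t _; apply: val_inj => /=.
by case: t => -[|y s] //= _; rewrite /thead (tnth_nth y).
Qed.

Lemma chain_gen (R : realFieldType) (X Y : finType) m (MA MB : finType)
  (P : protocol R X Y m MA MB) : valid_protocol P -> forall x y k ha hb,
  \sum_(a : k.-tuple MA) \sum_(b : k.-tuple MB) \prod_(j < k)
    (alice P x (ha ++ take j a) (hb ++ take j b) (tnth a j) *
     bob P y (ha ++ take j.+1 a) (hb ++ take j b) (tnth b j)) = 1.
Proof.
move=> [hA hB] x y k; elim: k => [|k IH] ha hb.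
  under eq_bigr do under eq_bigr do rewrite big_ord0.
  rewrite !sumr_const.
  have c0 : forall T : finType, #|[pred _ : 0.-tuple T | true]| = 1%N.
    by move=> T; rewrite -[X in #|X|]/(predT) card_tuple.
  by rewrite !c0.
rewrite sum_tupleS.
transitivity (\sum_(a0 : MA) alice P x ha hb a0 * \sum_(b0 : MB) bob P y (rcons ha a0) hb b0).
  apply: eq_bigr => a0 _.
  rewrite exchange_big sum_tupleS mulr_sumr; apply: eq_bigr => b0 _.
  rewrite -[RHS]mulr1 -[in RHS](IH (rcons ha a0) (rcons hb b0)) exchange_big mulr_sumr.
  apply: eq_bigr => b _; rewrite mulr_sumr; apply: eq_bigr => a _.
  rewrite big_ord_recl /= !cats0; congr (_ * _ * _).
  - by rewrite take0 cats1 (tnth_nth b0).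
  apply: eq_bigr => j _.
  rewrite /bump /= !add0n !add1n /= !cat_rcons.
  by rewrite !(tnth_nth a0) !(tnth_nth b0).
under eq_bigr => a0 _ do rewrite (proj2 (hB _ _ _)) mulr1.
exact: (proj2 (hA _ _ _)).
Qed.

Lemma chain (R : realFieldType) (X Y : finType) m (MA MB : finType)
  (P : protocol R X Y m MA MB) : valid_protocol P -> forall x y,
  \sum_(pi : transcript m MA MB) PA P x pi * PB P y pi = 1.
Proof.
move=> hP x y; rewrite -(@chain_gen _ _ _ _ _ _ P hP x y m [::] [::]) pair_big /=.
apply: eq_bigr => -[a b] _; rewrite /PA /PB -big_split /=.
by apply: eq_bigr => j _.
Qed.
Lemma decomp (R : realFieldType) (X : finType) (a : X -> R) (K : R) :
  0 <= K -> (forall x, 0 <= a x <= K) ->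
  exists c : {set X} -> R, (forall S, 0 <= c S) /\ \sum_S c S <= K /\
    forall x, a x = \sum_S c S * (x \in S)%:R.
Proof.
have Hz : forall (a : X -> R) (K : R), 0 <= K -> (forall x, 0 <= a x) ->
    [set x | 0 < a x] = set0 ->
    exists c : {set X} -> R, (forall S, 0 <= c S) /\ \sum_S c S <= K /\
    forall x, a x = \sum_S c S * (x \in S)%:R.
  move=> b L hL hb E; exists (fun _ => 0); split=> //; split.
    by rewrite big1.
  move=> x; rewrite big1 => [|S _]; last by rewrite mul0r.
  have : x \notin [set x | 0 < b x] by rewrite E inE.
  by rewrite inE -leNgt => h; apply/eqP; rewrite eq_le h hb.
suff H : forall k (a : X -> R) (K : R), (#|[set x | (0 < a x)%R]| <= k)%N ->
  0 <= K -> (forall x, 0 <= a x <= K) ->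
  exists c : {set X} -> R, (forall S, 0 <= c S) /\ \sum_S c S <= K /\
    forall x, a x = \sum_S c S * (x \in S)%:R.
  by move=> hK ha; exact: (H _ a K (leqnn _) hK ha).
elim=> [|k IH] b L hk hL hb.
  apply: Hz => // [x|]; first by case/andP: (hb x).
  by apply/eqP; rewrite -cards_eq0 -leqn0.
case: (set_0Vmem [set x | 0 < b x]) => [E|[x1 hx1]].
  by apply: Hz => // x; case/andP: (hb x).
rewrite inE in hx1.
have [x0 hx0 hmin] := @arg_minP _ R _ x1 (fun i => 0 < b i) b hx1.
set supp := [set x | 0 < b x] in hk *.
set c0 := b x0.
have c0K : c0 <= L by case/andP: (hb x0).
pose b' x := b x - c0 * (x \in supp)%:R.
have hb' : forall x, 0 <= b' x <= L - c0.
  move=> x; rewrite /b' /supp inE; case: (boolP (0 < b x)) => hx /=.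
    rewrite mulr1 subr_ge0 (hmin x hx) /=.
    by case/andP: (hb x) => _ h; rewrite lerB.
  rewrite mulr0 subr0; have := hb x; move: hx; rewrite -leNgt => hx.
  move=> /andP[h1 _]; have -> : b x = 0 by apply/eqP; rewrite eq_le h1 hx.
  by rewrite lexx subr_ge0.
have hk' : (#|[set x | (0 < b' x)%R]| <= k)%N.
  have sub : [set x | 0 < b' x] \subset supp :\ x0.
    apply/subsetP => x; rewrite !inE /b' /supp inE.
    case: (boolP (0 < b x)) => hx; last by rewrite mulr0 subr0 (negbTE hx).
    rewrite mulr1 andbT => h; apply/eqP => ex; move: h; rewrite ex subrr ltxx.
    by [].
  apply: leq_trans (subset_leq_card sub) _.
  move: hk; rewrite (cardsD1 x0 supp) /supp inE hx0 /=.
  by rewrite add1n ltnS.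
have [c' [c'0 [c'K c'E]]] := IH b' (L - c0) hk' (eq_ind_r is_true c0K (subr_ge0 c0 L)) hb'.
exists (fun S => c' S + (if S == supp then c0 else 0)); split.
  move=> S; apply: addr_ge0 => //; case: ifP => // _; exact: ltW.
split.
  rewrite big_split /= -big_mkcond /= big_pred1_eq.
  by rewrite -(subrK c0 L) lerD2r.
move=> x; under eq_bigr do rewrite mulrDl.
rewrite big_split /= -c'E (bigD1 supp) //= eqxx big1 ?addr0.
  by rewrite /b' subrK.
by move=> S /negbTE ->; rewrite mul0r.
Qed.

Lemma rect_massE (R : realFieldType) (X Y : finType) (w : X * Y -> R) S T :
  rect_mass w S T = \sum_u w u * (u.1 \in S)%:R * (u.2 \in T)%:R.
Proof.
rewrite /rect_mass big_mkcond; apply: eq_bigr => u _.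
by case: (u.1 \in S); case: (u.2 \in T); rewrite /= ?mulr1 ?mulr0.
Qed.

Lemma expand (R : realFieldType) (X Y : finType) (w : X * Y -> R)
  (a : X -> R) (b : Y -> R) (c : {set X} -> R) (e : {set Y} -> R) :
  (forall x, a x = \sum_S c S * (x \in S)%:R) ->
  (forall y, b y = \sum_T e T * (y \in T)%:R) ->
  \sum_u w u * a u.1 * b u.2 = \sum_S \sum_T c S * e T * rect_mass w S T.
Proof.
move=> ha hb.
under eq_bigr => u _ do rewrite ha hb -mulrA big_distrlr mulr_sumr.
rewrite exchange_big; apply: eq_bigr => S _.
under eq_bigr => u _ do rewrite mulr_sumr.
rewrite exchange_big; apply: eq_bigr => T _.
rewrite rect_massE mulr_sumr; apply: eq_bigr => u _; rewrite /=; ring.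
Qed.

Lemma key (R : realFieldType) (X Y : finType) (nu rho : X * Y -> R)
  (a : X -> R) (b : Y -> R) (K L k d : R) :
  0 <= K -> 0 <= L -> (forall x, 0 <= a x <= K) -> (forall y, 0 <= b y <= L) ->
  0 <= k -> 0 <= d ->
  (forall S T, k * (rect_mass rho S T - d) <= rect_mass nu S T) ->
  k * (\sum_u rho u * a u.1 * b u.2 - K * L * d) <= \sum_u nu u * a u.1 * b u.2.
Proof.
move=> hK hL ha hb hk hd hR.
have [c [c0 [cK cE]]] := @decomp _ _ _ _ hK ha.
have [e [e0 [eK eE]]] := @decomp _ _ _ _ hL hb.
rewrite !(@expand _ _ _ _ _ _ _ _ cE eE).
have sc0 : 0 <= \sum_S c S by apply: sumr_ge0.
have se0 : 0 <= \sum_T e T by apply: sumr_ge0.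
apply: (@le_trans _ _ (\sum_S \sum_T c S * e T * (k * (rect_mass rho S T - d)))).
  have -> : \sum_S \sum_T c S * e T * (k * (rect_mass rho S T - d)) =
     k * (\sum_S \sum_T c S * e T * rect_mass rho S T - d * ((\sum_S c S) * (\sum_T e T))).
    transitivity (\sum_S \sum_T (k * (c S * e T * rect_mass rho S T) - k * d * (c S * e T))).
      by apply: eq_bigr => S _; apply: eq_bigr => T _; ring.
    rewrite big_distrlr /= mulrBr mulrA !mulr_sumr -sumrB.
    by apply: eq_bigr => S _; rewrite !mulr_sumr -sumrB.
  apply: ler_wpM2l => //; apply: lerB => //.
  rewrite [K * L * d]mulrC; apply: ler_wpM2l => //; exact: ler_pM.
apply: ler_sum => S _; apply: ler_sum => T _; apply: ler_wpM2l => //.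
exact: mulr_ge0.
Qed.
Lemma PA_ge0 (R : realFieldType) (X Y : finType) m (MA MB : finType)
  (P : protocol R X Y m MA MB) : valid_protocol P -> forall x pi, 0 <= PA P x pi.
Proof. by move=> [hA _] x pi; apply: prodr_ge0 => j _; apply: (proj1 (hA _ _ _)). Qed.

Lemma PB_ge0 (R : realFieldType) (X Y : finType) m (MA MB : finType)
  (P : protocol R X Y m MA MB) : valid_protocol P -> forall y pi, 0 <= PB P y pi.
Proof. by move=> [_ hB] y pi; apply: prodr_ge0 => j _; apply: (proj1 (hB _ _ _)). Qed.

Lemma sum_joint (R : realFieldType) (X Y : finType) m (MA MB : finType)
  (P : protocol R X Y m MA MB) (w : X * Y -> R) (Pr : pred (X * Y)) :
  valid_protocol P ->
  \sum_(pi : transcript m MA MB) \sum_(u | Pr u) w u * PA P u.1 pi * PB P u.2 pi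
  = \sum_(u | Pr u) w u.
Proof.
move=> hP; rewrite exchange_big; apply: eq_bigr => u _.
under eq_bigr do rewrite -mulrA.
by rewrite -mulr_sumr (@chain _ _ _ _ _ _ P hP) mulr1.
Qed.

Lemma rect_nu (R : realFieldType) (X Y : finType) (mu : X * Y -> R) f z S T :
  rect_mass (fun u => if f u == z then mu u else 0) S T = rect_mass_f mu f z S T.
Proof.
rewrite /rect_mass /rect_mass_f big_mkcond [RHS]big_mkcond; apply: eq_bigr => u _.
by case: (u.1 \in S); case: (u.2 \in T); case: (f u == z).
Qed.

Lemma pi_bound (R : realFieldType) (X Y : finType) m (MA MB : finType)
  (P : protocol R X Y m MA MB) (mu rho : X * Y -> R) f z
  (etaA etaB : transcript m MA MB -> R) (K k d : R) pi :
  (forall u, 0 <= mu u) -> 0 <= K -> 0 <= k -> 0 <= d ->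
  0 < etaA pi -> 0 < etaB pi ->
  (forall x, 0 <= PA P x pi / etaA pi <= K) -> (forall y, 0 <= PB P y pi / etaB pi <= K) ->
  (forall S T, k * (rect_mass rho S T - d) <= rect_mass_f mu f z S T) ->
  k * (\sum_u rho u * PA P u.1 pi * PB P u.2 pi - K * K * d * (etaA pi * etaB pi))
  <= \sum_(u | f u == z) mu u * PA P u.1 pi * PB P u.2 pi.
Proof.
move=> hmu hK hk hd hA hB ha hb hR.
have hA0 : etaA pi != 0 by rewrite gt_eqF.
have hB0 : etaB pi != 0 by rewrite gt_eqF.
have := @key R X Y (fun u => if f u == z then mu u else 0) rho
  (fun x => PA P x pi / etaA pi) (fun y => PB P y pi / etaB pi) K K k d
  hK hK ha hb hk hd.
rewrite /=.
move=> /(_ _) H; have {}H := H (fun S T => ltac:(rewrite rect_nu; exact: hR)).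
have heta : 0 <= etaA pi * etaB pi by rewrite mulr_ge0 // ltW.
have := ler_wpM2r heta H.
have -> : \sum_(u | f u == z) mu u * PA P u.1 pi * PB P u.2 pi =
  (\sum_u (if f u == z then mu u else 0) * (PA P u.1 pi / etaA pi) * (PB P u.2 pi / etaB pi))
   * (etaA pi * etaB pi).
  rewrite mulr_suml big_mkcond; apply: eq_bigr => u _.
  case: (f u == z); last by rewrite !mul0r.
  by field; rewrite hA0 hB0.
have -> : \sum_u rho u * PA P u.1 pi * PB P u.2 pi =
  (\sum_u rho u * (PA P u.1 pi / etaA pi) * (PB P u.2 pi / etaB pi))
   * (etaA pi * etaB pi).
  rewrite mulr_suml; apply: eq_bigr => u _.
  by field; rewrite hA0 hB0.
apply: le_trans; rewrite le_eqVlt; apply/orP; left; apply/eqP; ring.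
Qed.

Theorem lemma3p8 (R : realFieldType) (delta eps eps' : R) (M n : nat)
  (mu : bits n * bits n -> R) (f : bits n * bits n -> bool)
  (m : nat) (MA MB : finType) (P : protocol R (bits n) (bits n) m MA MB) :
  0 < delta -> 0 < eps -> 0 < eps' ->
  is_distr mu ->
  rel_discrepancy f mu eps delta ->
  valid_protocol P ->
  univ_ext_info_le P M ->
  SD (transcript_cond P mu f false) (transcript_cond P mu f true)
    <= 20 * (eps + eps' + 2 ^+ (4 * M) / eps' ^+ 2 * delta).
Proof.
move=> hd he he' [mu0 mu1] [rho [[rho0 rho1] hdisc]] hP
  [etaA [etaB [hA0 [hB0 [[heta0 heta1] hbnd]]]]].
set W := 2 ^+ (4 * M) / eps' ^+ 2.
pose p z := \sum_(u | f u == z) mu u.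
pose Q z pi := \sum_(u | f u == z) mu u * PA P u.1 pi * PB P u.2 pi.
have TC : forall z pi, transcript_cond P mu f z pi = Q z pi / p z by [].
have sumQ : forall z, \sum_pi Q z pi = p z by move=> z; apply: sum_joint.
have Q0 : forall z pi, 0 <= Q z pi.
  move=> z pi; rewrite /Q; apply: sumr_ge0 => u _.
  by apply: mulr_ge0; [apply: mulr_ge0; [exact: mu0 | exact: (@PA_ge0 _ _ _ _ _ _ P hP)] | exact: (@PB_ge0 _ _ _ _ _ _ P hP)].
have p0 : forall z, 0 <= p z by move=> z; rewrite /p; apply: sumr_ge0.
have U0 : forall z pi, 0 <= transcript_cond P mu f z pi.
  by move=> z pi; rewrite TC divr_ge0.
have sumU : forall z, \sum_pi transcript_cond P mu f z pi = p z / p z.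
  by move=> z; under eq_bigr do rewrite TC; rewrite -mulr_suml sumQ.
have pp : forall z, p z / p z <= 1.
  by move=> z; case: (eqVneq (p z) 0) => [->|h]; rewrite ?mul0r ?divff.
have normB : forall a b : R, 0 <= a -> 0 <= b -> `|a - b| <= a + b.
  by move=> a b ha hb; rewrite ler_norml; apply/andP; split; lra.
have SD1 : SD (transcript_cond P mu f false) (transcript_cond P mu f true) <= 1.
  rewrite /SD; apply: (@le_trans _ _ (2^-1 * (\sum_pi (transcript_cond P mu f false pi +
     transcript_cond P mu f true pi)))).
    apply: ler_wpM2l; first by rewrite invr_ge0 ler0n.
    by apply: ler_sum => pi _; apply: normB.
  rewrite big_split /= !sumU.
  have := pp false; have := pp true; lra.
case: (leP 1 (20 * (eps + eps' + W * delta))) => [h1|hlt].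
  exact: le_trans SD1 h1.
pose K : R := 2 ^+ M.
have K1 : 1 <= K by rewrite /K exprn_ege1 // ler1n.
have e2 : 0 < eps' ^+ 2 by rewrite exprn_gt0.
have W0 : 0 <= W by rewrite /W divr_ge0 // ?exprn_ge0 // ltW.
have Wd0 : 0 <= W * delta by rewrite mulr_ge0 // ltW.
have eps_s : eps < 20^-1 by lra.
have eps'_s : eps' < 20^-1 by lra.
have Wd_s : W * delta < 20^-1 by lra.
have KW : K * K <= W.
  rewrite /W ler_pdivlMr // -/K.
  have -> : (2 : R) ^+ (4 * M) = K * K * (K * K) by rewrite mulnC exprM /K; ring.
  have e21 : eps' ^+ 2 <= 1 by rewrite expr2; nra.
  have KK1 : 1 <= K * K by nra.
  nra.
have d1 : delta <= 1 by nra.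
have rhoT : rect_mass rho setT setT = 1.
  by rewrite -rho1 /rect_mass; apply: eq_bigl => u; rewrite !in_setT.
have muT : forall z, rect_mass_f mu f z setT setT = p z.
  by move=> z; rewrite /rect_mass_f /p; apply: eq_bigl => u; rewrite !in_setT.
have pge : forall z, 2^-1 - eps <= p z.
  move=> z; have [h0 h1] := hdisc setT setT (ltac:(by rewrite rhoT)).
  by case: z; rewrite -muT; [move: h1 | move: h0]; rewrite rhoT mulr1.
have psum : p false + p true = 1.
  rewrite -mu1 (bigID (fun u => f u)) /= addrC /p; congr (_ + _); apply: eq_bigl => u.
    by case: (f u).
  by case: (f u).
pose x0 : bits n := [ffun=> false].
have etaA0 : forall pi, 0 < etaA pi.
  move=> pi; rewrite lt_def hA0 andbT; apply/eqP => E.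
  have [/andP[h _] _] := hbnd x0 x0 pi; move: h; rewrite E invr0 mulr0.
  by rewrite leNgt invr_gt0 exprn_gt0.
have etaB0 : forall pi, 0 < etaB pi.
  move=> pi; rewrite lt_def hB0 andbT; apply/eqP => E.
  have [_ /andP[h _]] := hbnd x0 x0 pi; move: h; rewrite E invr0 mulr0.
  by rewrite leNgt invr_gt0 exprn_gt0.
have m0 : (0 : R) <= 2 ^- M by rewrite invr_ge0 exprn_ge0.
have hR : forall z S T, (2^-1 - eps) * (rect_mass rho S T - delta) <= rect_mass_f mu f z S T.
  move=> z S T; have rf0 : 0 <= rect_mass_f mu f z S T by apply: sumr_ge0.
  have k0 : 0 <= 2^-1 - eps by lra.
  case: (leP delta (rect_mass rho S T)) => hr.
    have [h0 h1] := hdisc S T hr.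
    have hkd : 0 <= (2^-1 - eps) * delta by rewrite mulr_ge0 // ltW.
    by rewrite mulrBr; move: rf0; case: z => rf0; lra.
  nra.
pose T pi := \sum_u rho u * PA P u.1 pi * PB P u.2 pi.
pose eta pi := etaA pi * etaB pi.
pose L pi := (1 - 4 * eps) * (T pi - K * K * delta * eta pi).
have K0 : 0 <= K by lra.
have pup : forall z, p z <= 2^-1 + eps.
  by case; [have := pge false | have := pge true]; lra.
have LB : forall z pi, L pi <= transcript_cond P mu f z pi.
  move=> z pi.
  have ha : forall x, 0 <= PA P x pi / etaA pi <= K.
    by move=> x; have [/andP[h1 h2] _] := hbnd x x0 pi; rewrite (le_trans m0 h1) h2.
  have hb : forall y, 0 <= PB P y pi / etaB pi <= K.
    by move=> y; have [_ /andP[h1 h2]] := hbnd x0 y pi; rewrite (le_trans m0 h1) h2.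
  have k0 : 0 <= 2^-1 - eps by lra.
  have H := @pi_bound R _ _ m MA MB P mu rho f z etaA etaB K (2^-1 - eps) delta pi
    mu0 K0 k0 (ltW hd) (etaA0 pi) (etaB0 pi) ha hb (hR z).
  rewrite TC; have Qz := Q0 z pi.
  have pz : 0 < p z by have := pge z; lra.
  have pz2 : p z <= 2^-1 + eps by apply: pup.
  have e4 : 0 <= 1 - 4 * eps by lra.
  have hq : (1 - 4 * eps) * p z <= 2^-1 - eps by nra.
  rewrite /L; set B := T pi - _.
  case: (leP B 0) => hB.
    apply: (@le_trans _ _ 0); first by nra.
    by rewrite divr_ge0 // ltW.
  rewrite ler_pdivlMr //.
  have : (1 - 4 * eps) * B * p z <= (2^-1 - eps) * B by nra.
  move: H; rewrite -/B -/(Q z pi); lra.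
have sumT : \sum_pi T pi = 1.
  rewrite /T -rho1; exact: (@sum_joint _ _ _ _ _ _ P rho xpredT hP).
have sumeta : \sum_pi eta pi = 1 by rewrite -heta1.
have sumL : \sum_pi L pi = (1 - 4 * eps) * (1 - K * K * delta).
  by rewrite /L -mulr_sumr sumrB -mulr_sumr sumT sumeta mulr1.
rewrite /SD.
apply: (@le_trans _ _ (2^-1 * \sum_pi ((transcript_cond P mu f false pi - L pi)
   + (transcript_cond P mu f true pi - L pi)))).
  apply: ler_wpM2l; first by rewrite invr_ge0 ler0n.
  apply: ler_sum => pi _; have := LB false pi; have := LB true pi.
  by rewrite ler_norml => h1 h2; apply/andP; split; lra.
rewrite big_split /= !sumrB !sumU sumL.
have pF : p false != 0 by have := pge false; apply: contraTneq => ->; lra.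
have pT : p true != 0 by have := pge true; apply: contraTneq => ->; lra.
rewrite !divff //.
have h1 : K * K * delta <= W * delta by apply: ler_wpM2r => //; apply: ltW.
have h2 : 0 <= eps * (K * K * delta) by rewrite mulr_ge0 ?mulr_ge0 // ltW.
nra.
Qed.
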